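(* Let $k$ be a field of characteristic $p>0$, $P$ a finite poset, $R=\mathcal{R}_k[J(P)]$ the Hibi ring and $\mathfrak{m}=R_+$. Then for all sufficiently large $Q=p^e$ and every integer $r\ge(\operatorname{rank}^*P+2)(Q-1)+1$, we have $\mathfrak{m}^r\subseteq\mathfrak{m}^{[Q]}$.
   Context: Let $P=\{p_1,\dots,p_N\}$ be a finite poset and $J(P)$ the set of poset ideals of $P$ (down-closed subsets, including $\emptyset$ and $P$). The Hibi ring is $\mathcal{R}_k[J(P)]=k[\,T\prod_{p_i\in I}X_i\mid I\in J(P)\,]\subseteq k[T,X_1,\dots,X_N]$, each generator in degree $1$; $\mathfrak{m}=R_+$ is generated by these generators; $\mathfrak{m}^{[Q]}=(x^Q\mid x\in\mathfrak{m})$. $x\lessdot y$ means $x<y$ with no $z$ satisfying $x<z<y$. A path is a sequence $C=(q_1,\dots,q_t)$ of distinct elements of $P$ with $q_1$ minimal in $P$, consecutive elements related by $q_i\lessdot q_{i+1}$ or $q_{i+1}\lessdot q_i$, and $q_{t-1}\lessdot q_t$ (when $t\ge2$); it is maximal if $q_t$ is maximal in $P$. For $1<i<t$, $q_i$ is locally maximal if $q_{i-1}\lessdot q_i$ and $q_{i+1}\lessdot q_i$, locally minimal if $q_i\lessdot q_{i-1}$ and $q_i\lessdot q_{i+1}$; $q_1$ counts as locally minimal and $q_t$ as locally maximal. The decomposition $C=A_1+D_1+\cdots+D_{n-1}+A_n$ splits $C$ into consecutive blocks: $A_1$ is $q_1$ through the first locally maximal element, $D_1$ the following elements through the next locally minimal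 element, $A_2$ the following elements through the next locally maximal element, etc., $A_n$ ending at $q_t$; $t(A_i)$ is the last element of $A_i$, $V(\cdot)$ the set of elements of a block, $\langle A\rangle=\{q\in P\mid q\le t(A)\}$, and $\langle A_i\setminus t(A_i)\rangle$ the poset ideal generated by the elements of $A_i$ other than $t(A_i)$. $C$ satisfies ( * ) if for all $1\le i\le n-1$: (1) $V(D_i)\cap(\bigcup_{m=1}^{i-1}\langle A_m\rangle\cup\langle A_i\setminus t(A_i)\rangle\cup\{t(A_i)\})=\emptyset$; (2) $V(A_{i+1})\cap\bigcup_{m=1}^{i}\langle A_m\rangle=\emptyset$. $\operatorname{len}^*C=\#\{i\mid q_i\lessdot q_{i+1}\}$, and $\operatorname{rank}^*P$ is the maximum of $\operatorname{len}^*C$ over maximal paths $C$ satisfying ( * ). *)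

(* Defs.v *)
From HB Require Import structures.
From mathcomp Require Import all_boot all_order all_algebra.
From mathcomp Require Import mpoly.
Set Implicit Arguments.
Unset Strict Implicit.
Unset Printing Implicit Defensive.
Import Order.Theory GRing.Theory.

Section PosetPaths.
Context {disp : Order.disp_t} {T : finPOrderType disp}.
Local Open Scope order_scope.

Definition covers (x y : T) : bool :=
  (x < y) && [forall z, ~~ ((x < z) && (z < y))].
Definition minimalb (x : T) : bool := [forall z, ~~ (z < x)].
Definition maximalb (x : T) : bool := [forall z, ~~ (x < z)].

(* s = (q_1, ..., q_t), stored 0-indexed: q j = q_{j+1}; x0 is a dummy default *)
Variables (x0 : T) (s : seq T).
Local Notation t := (size s).
Definition q (j : nat) : T := nth x0 s j.
Definition upstep (j : nat) : bool := covers (q j) (q j.+1).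
Definition downstep (j : nat) : bool := covers (q j.+1) (q j).

Definition is_path : bool :=
  [&& s != [::], uniq s, minimalb (q 0),
      all (fun j => upstep j || downstep j) (iota 0 t.-1)
    & (1 < t) ==> upstep (t - 2)].

Definition is_maximal_path : bool := is_path && maximalb (q t.-1).

Definition locmax (j : nat) : bool :=
  (j == t.-1) || [&& 0 < j, j < t.-1, upstep j.-1 & downstep j].
Definition locmin (j : nat) : bool :=
  (j == 0) || [&& 0 < j, j < t.-1, downstep j.-1 & upstep j].
Definition maxs : seq nat := filter locmax (iota 0 t).
Definition mins : seq nat := filter locmin (iota 0 t).
Definition nblocks : nat := size maxs.

(* block A_{b+1} (b 0-indexed): positions from just after the b-th locally
   minimal position (from 0 for b = 0) up to the b-th locally maximal one *)
Definition inA (b j : nat) : bool :=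
  ((b == 0) || (nth 0 mins b < j)) && (j <= nth 0 maxs b).
(* block D_{b+1}: positions after the b-th locally maximal position up to the
   (b+1)-th locally minimal one *)
Definition inD (b j : nat) : bool :=
  (nth 0 maxs b < j) && (j <= nth 0 mins b.+1).

Definition tA (b : nat) : T := q (nth 0 maxs b).
Definition VA (b : nat) : {set T} :=
  [set x | has (fun j => inA b j && (q j == x)) (iota 0 t)].
Definition VD (b : nat) : {set T} :=
  [set x | has (fun j => inD b j && (q j == x)) (iota 0 t)].
Definition downA (b : nat) : {set T} := [set y | y <= tA b].
Definition downAminus (b : nat) : {set T} :=
  [set y | has (fun j => [&& inA b j, j != nth 0 maxs b & y <= q j]) (iota 0 t)].

(* conditions (1) and (2) for i = b+1 *)
Definition cond1 (b : nat) : bool :=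
  [disjoint VD b &
     (\bigcup_(m < b) downA m) :|: downAminus b :|: [set tA b]].
Definition cond2 (b : nat) : bool :=
  [disjoint VA b.+1 & \bigcup_(m < b.+1) downA m].

Definition star : bool :=
  all (fun b => cond1 b && cond2 b) (iota 0 nblocks.-1).

End PosetPaths.

Section Rank.
Context {disp : Order.disp_t} {T : finPOrderType disp}.

Definition lenstar (s : seq T) : nat :=
  count (fun pr => covers pr.1 pr.2) (zip s (behead s)).

Definition good_path (s : seq T) : bool :=
  match s with
  | [::] => false
  | x0 :: _ => is_maximal_path x0 s && star x0 s
  end.

(* rank^* P : maximum of len^* over maximal paths satisfying ( * ).  Paths
   consist of distinct elements, so they have at most #|T| elements, and we
   range over all tuples of such sizes. *)
Definition rankstar : nat :=
  \max_(k < #|T|.+1) \max_(u : k.-tuple T | good_path u) lenstar u.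

End Rank.

(* Variable index ord0 is T, index lift ord0 (enum_rank p) is X_p.            *)
Section Hibi.
Context {disp : Order.disp_t} {T : finPOrderType disp} {K : fieldType}.
Local Notation PR := {mpoly K[#|T|.+1]}.
Local Open Scope ring_scope.

Definition varX (x : T) : 'I_#|T|.+1 := lift ord0 (enum_rank x).

Definition is_poset_ideal (I : {set T}) : bool :=
  [forall x, forall y, ((y <= x)%O && (x \in I)) ==> (y \in I)].

Definition hibi_gen (I : {set T}) : PR :=
  'X_ord0 * \prod_(x in I) 'X_(varX x).

Inductive inHibi : PR -> Prop :=
  | inHibi_gen (I : {set T}) : is_poset_ideal I -> inHibi (hibi_gen I)
  | inHibi_const (c : K) : inHibi c%:MP
  | inHibi_add f g : inHibi f -> inHibi g -> inHibi (f + g)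
  | inHibi_mul f g : inHibi f -> inHibi g -> inHibi (f * g).

(* m = R_+ : elements of R whose degree-0 component (T-degree 0) vanishes *)
Definition in_m (f : PR) : Prop :=
  inHibi f /\ (forall mm : 'X_{1.. #|T|.+1}, mm ord0 = 0%N -> mcoeff mm f = 0).

Definition ideal_gen (S : PR -> Prop) (f : PR) : Prop :=
  exists l : seq (PR * PR),
    (forall pr, pr \in l -> inHibi pr.1 /\ S pr.2) /\
    f = \sum_(pr <- l) pr.1 * pr.2.

Definition m_pow (r : nat) : PR -> Prop :=
  ideal_gen (fun g => exists xs : seq PR,
                [/\ size xs = r, (forall x, x \in xs -> in_m x)
                  & g = \prod_(x <- xs) x]).

Definition m_frob (Q : nat) : PR -> Prop :=
  ideal_gen (fun g => exists x, in_m x /\ g = x ^+ Q).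

End Hibi.

(* Main.v *)
Require Import Defs.
From HB Require Import structures.
From mathcomp Require Import all_boot all_order all_algebra.
From mathcomp Require Import mpoly.
From mathcomp Require Import zify ring.
Set Implicit Arguments.
Unset Strict Implicit.
Unset Printing Implicit Defensive.

Module P1.

Fixpoint cnt {A : Type} (f : A -> A -> bool) (x : A) (p : seq A) : nat :=
  if p is y :: p' then f x y + cnt f y p' else 0.

Lemma cnt_cat A (f : A -> A -> bool) x p1 p2 :
  cnt f x (p1 ++ p2) = cnt f x p1 + cnt f (last x p1) p2.
Proof. by elim: p1 x => [|y p IH] x //=; rewrite IH addnA. Qed.

Lemma cnt_le A (f g : A -> A -> bool) x p :
  (forall u v, f u v -> g u v) -> cnt f x p <= cnt g x p.
Proof.
move=> H; elim: p x => [|y p IH] x //=; apply: leq_add => //.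
by case: (f x y) (H x y) => //= ->.
Qed.

Lemma cnt_pos A (f : A -> A -> bool) x p k :
  k < size p -> f (nth x (x :: p) k) (nth x p k) -> 0 < cnt f x p.
Proof.
elim: p x k => [|y p IH] x [|k] //=.
  by move=> _ ->.
move=> Hk Hf; rewrite addn_gt0; apply/orP; right; apply: (IH y k Hk).
have Hk' : k < size p by [].
move: Hf; rewrite (@set_nth_default _ (y :: p) y x); last by rewrite /= ltnW.
by rewrite (@set_nth_default _ p y x).
Qed.

Lemma cnt0 (A : Type) (e f : A -> A -> bool) x p :
  path e x p -> (forall u v, e u v -> ~~ f u v) -> cnt f x p = 0.
Proof.
move=> Hp H; elim: p x Hp => [|y p IH] x //= /andP[Hxy Hp].
by rewrite IH // addn0; apply/eqP; rewrite eqb0; apply: H.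
Qed.

Lemma last_take (A : Type) (x : A) p i :
  i <= size p -> last x (take i p) = nth x (x :: p) i.
Proof.
elim: p x i => [|y p IH] x [|i] //= Hi.
by rewrite IH // (@set_nth_default _ (y :: p) y x).
Qed.

Lemma split3 (A : eqType) (x : A) p i j : i <= j -> j <= size p ->
  [/\ p = take i p ++ take (j - i) (drop i p) ++ drop j p,
      last x (take i p) = nth x (x :: p) i &
      last (nth x (x :: p) i) (take (j - i) (drop i p)) = nth x (x :: p) j].
Proof.
move=> Hij Hj; split.
- rewrite -{2}(subnK Hij) -drop_drop cat_take_drop cat_take_drop //.
- by rewrite last_take // (leq_trans Hij).
- rewrite last_take; last by rewrite size_drop leq_sub2r.
  have Hi : i < size (x :: p) by rewrite /= ltnS (leq_trans Hij).
  have -> : nth x (x :: p) i :: drop i p = drop i (x :: p).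
    by rewrite (drop_nth x Hi).
  by rewrite nth_drop subnKC // (@set_nth_default _ (x :: p) x).
Qed.

Lemma lenstar_cnt {disp : Order.disp_t} {T : finPOrderType disp} (x : T) p :
  lenstar (x :: p) = cnt covers x p.
Proof.
rewrite /lenstar /=; elim: p x => [|y p IH] x //=.
by rewrite -IH.
Qed.

End P1.
Import P1.

Module P2.
Import Order.Theory.

Section PosetLemmas.
Context {disp : Order.disp_t} {T : finPOrderType disp}.
Local Open Scope order_scope.
Implicit Types x y z w : T.

Lemma covers_lt x y : covers x y -> x < y.
Proof. by case/andP. Qed.

Lemma covers_asym x y : covers x y -> covers y x -> False.
Proof.
move=> /covers_lt H1 /covers_lt H2.
by move: (lt_trans H1 H2); rewrite ltxx.
Qed.

Lemma not_covers x y : x < y -> ~~ covers x y -> exists w, (x < w) && (w < y).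
Proof.
move=> Hxy; rewrite /covers Hxy /= => /forallPn [w]; rewrite negbK => H.
by exists w.
Qed.

Lemma interval_ind (P : T -> T -> Prop) :
  (forall x y, covers x y -> P x y) ->
  (forall x w y, x < w -> w < y -> P x w -> P w y -> P x y) ->
  forall x y, x < y -> P x y.
Proof.
move=> Hc Ht.
suff H : forall (n : nat) x y, leq #|[set w : T | (x < w) && (w < y)]| n -> x < y -> P x y.
  by move=> x y; apply: (H _ x y (leqnn _)).
elim=> [|n IH] x y Hn Hxy.
  case Hcov: (covers x y); first exact: Hc.
  have [w Hw] := not_covers Hxy (negbT Hcov).
  have : leq 1 #|[set w : T | (x < w) && (w < y)]| by apply/card_gt0P; exists w; rewrite inE.
  by rewrite leqn0 in Hn; rewrite (eqP Hn).
case Hcov: (covers x y); first exact: Hc.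
have [w /andP[Hxw Hwy]] := not_covers Hxy (negbT Hcov).
apply: (Ht x w y Hxw Hwy).
- apply: (IH x w) => //; rewrite -ltnS; apply: leq_trans Hn; apply: proper_card.
  apply/properP; split.
    by apply/subsetP => u; rewrite !inE => /andP[-> /lt_trans ->].
  by exists w; rewrite !inE ?Hxw ?Hwy ?ltxx ?andbF.
- apply: (IH w y) => //; rewrite -ltnS; apply: leq_trans Hn; apply: proper_card.
  apply/properP; split.
    by apply/subsetP => u; rewrite !inE => /andP[/(lt_trans Hxw) -> ->].
  by exists w; rewrite !inE ?Hxw ?Hwy ?ltxx.
Qed.

Lemma ex_minimal_below y : exists x, minimalb x && (x <= y).
Proof.
suff H : forall (n : nat) y, leq #|[set w : T | w < y]| n -> exists x, minimalb x && (x <= y).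
  exact: (H _ y (leqnn _)).
elim=> [|n IH] {}y Hn.
  exists y; rewrite lexx andbT; apply/forallP => z; apply/negP => Hz.
  have : leq 1 #|[set w : T | w < y]| by apply/card_gt0P; exists z; rewrite inE.
  by rewrite leqn0 in Hn; rewrite (eqP Hn).
case Hm: (minimalb y); first by exists y; rewrite lexx andbT.
move/negbT: Hm => /forallPn [z]; rewrite negbK => Hzy.
have [x /andP[Hx Hxz]] : exists x, minimalb x && (x <= z).
  apply: (IH z); rewrite -ltnS; apply: leq_trans Hn; apply: proper_card.
  apply/properP; split.
    by apply/subsetP => u; rewrite !inE => /lt_trans ->.
  by exists z; rewrite !inE ?Hzy ?ltxx.
by exists x; rewrite Hx (le_trans Hxz) ?ltW.
Qed.

Lemma ex_maximal_above y : exists x, maximalb x && (y <= x).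
Proof.
suff H : forall (n : nat) y, leq #|[set w : T | y < w]| n -> exists x, maximalb x && (y <= x).
  exact: (H _ y (leqnn _)).
elim=> [|n IH] {}y Hn.
  exists y; rewrite lexx andbT; apply/forallP => z; apply/negP => Hz.
  have : leq 1 #|[set w : T | y < w]| by apply/card_gt0P; exists z; rewrite inE.
  by rewrite leqn0 in Hn; rewrite (eqP Hn).
case Hm: (maximalb y); first by exists y; rewrite lexx andbT.
move/negbT: Hm => /forallPn [z]; rewrite negbK => Hzy.
have [x /andP[Hx Hxz]] : exists x, maximalb x && (z <= x).
  apply: (IH z); rewrite -ltnS; apply: leq_trans Hn; apply: proper_card.
  apply/properP; split.
    by apply/subsetP => u; rewrite !inE => /(lt_trans Hzy) ->.
  by exists z; rewrite !inE ?Hzy ?ltxx.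
by exists x; rewrite Hx (le_trans _ Hxz) ?ltW.
Qed.

Lemma up_path (e : rel T) u v :
  (forall w w', u <= w -> w' <= v -> covers w w' -> e w w') -> u <= v ->
  exists c, path e u c /\ last u c = v.
Proof.
move=> He; rewrite le_eqVlt => /orP[/eqP <-|Huv]; first by exists [::].
move: u v Huv He; apply: (@interval_ind (fun u v =>
  (forall w w', u <= w -> w' <= v -> covers w w' -> e w w') ->
  exists c, path e u c /\ last u c = v)) => [x y Hc He|x w y Hxw Hwy IH1 IH2 He].
  by exists [:: y]; rewrite /= andbT He.
have [c1 [Hp1 Hl1]] : exists c, path e x c /\ last x c = w.
  by apply: IH1 => a b Ha Hb; apply: He => //; rewrite (le_trans Hb) ?ltW.
have [c2 [Hp2 Hl2]] : exists c, path e w c /\ last w c = y.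
  by apply: IH2 => a b Ha Hb; apply: He => //; rewrite (le_trans _ Ha) ?ltW.
by exists (c1 ++ c2); rewrite cat_path last_cat Hl1 Hp1 Hp2.
Qed.

Lemma down_path (u v : T) : v <= u -> exists c, path (fun a b => covers b a) u c /\ last u c = v.
Proof.
rewrite le_eqVlt => /orP[/eqP ->|Hvu]; first by exists [::].
move: v u Hvu; apply: (@interval_ind (fun v u =>
  exists c, path (fun a b => covers b a) u c /\ last u c = v))
  => [x y Hc|x w y Hxw Hwy [c1 [Hp1 Hl1]] [c2 [Hp2 Hl2]]].
  by exists [:: x]; rewrite /= andbT.
by exists (c2 ++ c1); rewrite cat_path last_cat Hl2 Hp1 Hp2.
Qed.

End PosetLemmas.

End P2.
Import P2.

Module P3.
Import Order.Theory.

Lemma uniqify (A : eqType) (e : rel A) x p : path e x p ->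
  exists p', [/\ path e x p', uniq (x :: p'), last x p' = last x p &
                 forall f, cnt f x p' <= cnt f x p].
Proof.
move: {2}(size p) (leqnn (size p)) => n; elim: n x p => [|n IH] x p Hn Hp.
  by case: p Hn Hp => // _ _; exists [::].
case Hu: (uniq (x :: p)); first by exists p; split.
move/negbT: Hu => /(uniqPn x) [i [j [Hij Hj Heq]]].
have Hj' : j <= size p by [].
have Hs : size (take i p ++ drop j p) <= n.
  rewrite size_cat size_take size_drop.
  move: Hn Hij Hj'; case: (ltnP i (size p)) => /= Hc; lia.
have [Hdec Hl1 Hl2] := split3 x (ltnW Hij) Hj'.
set p1 := take i p in Hdec Hl1 Hl2 Hs; set p2 := take (j - i) (drop i p) in Hdec Hl1 Hl2.
set p3 := drop j p in Hdec Hl1 Hl2 Hs.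
move: (Hp); rewrite {1}Hdec !cat_path Hl1 Hl2 => /and3P[Hp1 Hp2 Hp3].
have Hp' : path e x (p1 ++ p3) by rewrite cat_path Hp1 Hl1 Heq.
have [p' [Hp'1 Hp'2 Hp'3 Hp'4]] := IH x _ Hs Hp'.
exists p'; split => //.
  by rewrite Hp'3 Hdec !last_cat Hl1 Hl2 Heq.
move=> f; apply: (leq_trans (Hp'4 f)).
by rewrite Hdec !cnt_cat Hl1 Hl2 -Heq leq_add2l leq_addl.
Qed.

Section Deriv.
Context {disp : Order.disp_t} {T : finPOrderType disp}.
Variables (a : T -> nat) (r Q : nat).
Hypothesis Ha : forall x y : T, (x <= y)%O -> a y <= a x.
Hypothesis HQ : 1 < Q.

Definition inU (y : T) := r - Q < a y.
Definition vs : rel T :=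
  fun u v => covers v u || (covers u v && (inU v || (a u < a v + Q))).
Definition costf : rel T := fun u v => covers u v && ~~ inU v.
Definition dpath (x : T) (p : seq T) :=
  [&& minimalb x, inU x, path vs x p, a (last x p) < Q & maximalb (last x p)].

Lemma A1 x p : path vs x p ->
  minn (a x) (r - Q).+1 <= minn (a (last x p)) (r - Q).+1 + (Q - 1) * cnt costf x p.
Proof.
elim: p x => [|y p IH] x /=; first by rewrite muln0 addn0.
move=> /andP[Hv Hp]; have {}IH := IH y Hp.
suff H : minn (a x) (r - Q).+1 <= minn (a y) (r - Q).+1 + (Q - 1) * costf x y.
  by move: IH H; lia.
move: Hv; rewrite /vs /costf /inU.
case Hd: (covers y x) => /=.
  have := Ha (ltW (covers_lt Hd)) => H _.
  move: H; lia.
case Hc: (covers x y) => //= H.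
case Hu: (r - Q < a y) => /=; move: H; rewrite Hu /=; lia.
Qed.

Lemma A_bound x p rk : dpath x p -> (rk + 2) * (Q - 1) + 1 <= r -> rk < cnt costf x p.
Proof.
case/and5P => _ Hu Hp Hl _ Hr.
have := A1 Hp; move: Hu Hl; rewrite /inU => Hu Hl H.
set C := cnt costf x p in H *.
rewrite ltnNge; apply/negP => HC.
have H2 : (Q - 1) * C <= (Q - 1) * rk by rewrite leq_mul2l HC orbT.
move: H H2 Hr Hu Hl HQ; nia.
Qed.

Lemma downc_vs u v : covers v u -> vs u v.
Proof. by rewrite /vs => ->. Qed.

Lemma shortcut x p i j k : path vs x p -> i < j -> j <= size p ->
  (nth x (x :: p) j <= nth x (x :: p) i)%O -> i <= k -> k < j ->
  covers (nth x (x :: p) k) (nth x p k) ->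
  exists p', [/\ path vs x p', last x p' = last x p & cnt covers x p' < cnt covers x p].
Proof.
move=> Hp Hij Hj Hle Hik Hkj Hcov.
have [Hdec Hl1 Hl2] := split3 x (ltnW Hij) Hj.
set p1 := take i p in Hdec Hl1 Hl2; set p2 := take (j - i) (drop i p) in Hdec Hl1 Hl2.
set p3 := drop j p in Hdec Hl1 Hl2.
set u := nth x (x :: p) i in Hl1 Hl2 Hle; set v := nth x (x :: p) j in Hl2 Hle.
have [c [Hc Hlc]] := down_path Hle.
have Hp0 := Hp; move: (Hp); rewrite {1}Hdec !cat_path Hl1 Hl2 => /and3P[Hp1 Hp2 Hp3].
exists (p1 ++ c ++ p3); split.
- rewrite !cat_path Hp1 Hl1 Hlc Hp3 andbT /=.
  by apply: (sub_path _ Hc) => a0 b0; apply: downc_vs.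
- by rewrite {1}Hdec !last_cat Hl1 Hlc Hl2.
- rewrite {1}Hdec !cnt_cat Hl1 Hl2 Hlc ltn_add2l ltn_add2r.
  rewrite (@cnt0 _ (fun a b => covers b a) covers u c) //; last first.
    by move=> a0 b0 H; apply/negP => H'; apply: (covers_asym H H').
  have Hsz : size p2 = j - i.
    by rewrite /p2 size_take size_drop; case: ltnP => //; lia.
  apply: (@cnt_pos _ _ _ _ (k - i)); first by rewrite Hsz; lia.
  have E1 : u :: p2 = take (j - i).+1 (drop i (x :: p)).
    have Hi : i < size (x :: p) by rewrite /= ltnS (leq_trans (ltnW Hij)).
    by rewrite (drop_nth x Hi).
  rewrite E1 nth_take; last by lia.
  rewrite nth_drop subnKC // (@set_nth_default _ (x :: p) x u); last first.
    by rewrite /= ltnS (leq_trans (ltnW Hkj)).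
  rewrite /p2 nth_take; last by lia.
  rewrite nth_drop subnKC // (@set_nth_default _ p x u) //.
  exact: (leq_trans Hkj).
Qed.

End Deriv.

End P3.
Import P3.

Module P4.
Import Order.Theory.

Lemma count_iotaS (P : pred nat) n : count P (iota 0 n.+1) = count P (iota 0 n) + P n.
Proof. by rewrite -[n.+1]addn1 iotaD count_cat /= addn0. Qed.

Lemma count_iota_mono (P : pred nat) m n : m <= n -> count P (iota 0 m) <= count P (iota 0 n).
Proof. by move=> H; rewrite -(subnKC H) iotaD count_cat leq_addr. Qed.

Lemma nth_filter_iota (P : pred nat) t k : k < size (filter P (iota 0 t)) ->
  [/\ nth 0 (filter P (iota 0 t)) k < t, P (nth 0 (filter P (iota 0 t)) k) &
      count P (iota 0 (nth 0 (filter P (iota 0 t)) k)) = k].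
Proof.
elim: t k => [|t IH] k //.
rewrite -[t.+1]addn1 iotaD filter_cat size_cat nth_cat /= add0n.
move=> Hk'; case: (ltnP k (size (filter P (iota 0 t)))) => Hk.
  by have [H1 H2 H3] := IH k Hk; split => //; rewrite addn1 ltnS ltnW.
move: Hk'; case HP: (P t) => /= Hk'; last by move: Hk Hk'; rewrite addn0; lia.
have -> : k - size (filter P (iota 0 t)) = 0 by move: Hk Hk'; lia.
split => //=; first by rewrite addn1.
by move: Hk Hk'; rewrite size_filter; lia.
Qed.

Lemma ltO (x y : nat) : (x < y)%O = (x < y)%N. Proof. by []. Qed.
Lemma leO (x y : nat) : (x <= y)%O = (x <= y)%N. Proof. by []. Qed.

Section Star.
Context {disp : Order.disp_t} {T : finPOrderType disp}.
Variables (x0 : T) (s : seq T).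
Local Notation t := (size s).
Local Notation q := (q x0 s).
Local Notation up := (upstep x0 s).
Local Notation dn := (downstep x0 s).
Hypothesis Hsteps : forall j, j.+1 < t -> up j || dn j.
Hypothesis Hmin : minimalb (q 0).

Lemma updown_excl j : up j -> dn j -> False.
Proof. exact: covers_asym. Qed.

Lemma first_up : 1 < t -> up 0.
Proof.
move=> Ht; case/orP: (Hsteps Ht) => // Hd.
move: Hmin => /forallP /(_ (q 1)); rewrite (covers_lt Hd) //.
Qed.

Lemma count_inv j : 0 < j -> j < t ->
  count (locmin x0 s) (iota 0 j) = count (locmax x0 s) (iota 0 j) + up j.-1.
Proof.
elim: j => [|j IH] // _ Hj.
case: j IH Hj => [|j] IH Hj.
  rewrite /= /locmin /locmax /= first_up //.
  by case: t Hj => [|[|t']].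
rewrite count_iotaS [in RHS]count_iotaS IH // ?(ltnW Hj) //=.
have Hj1 : j.+1 < t.-1 by move: Hj; lia.
rewrite /locmin /locmax !ltO Hj1 /=.
have -> : (j.+1 == t.-1) = false by apply/negbTE; move: Hj; lia.
have H1 := Hsteps (ltnW Hj); have H2 := Hsteps Hj.
have E1 := @updown_excl j; have E2 := @updown_excl j.+1.
move: H1 H2 E1 E2.
by case: (up j); case: (dn j); case: (up j.+1); case: (dn j.+1) => //= _ _ H1 H2;
  try (exfalso; by [apply: H1|apply: H2]); lia.
Qed.

Hypothesis Hlast : 1 < t -> up (t - 2).

Local Notation M := (maxs x0 s).
Local Notation N := (mins x0 s).

Lemma size_maxs : size M = count (locmax x0 s) (iota 0 t).
Proof. by rewrite size_filter. Qed.

Lemma maxs_nth b : b < size M ->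
  [/\ nth 0 M b < t, locmax x0 s (nth 0 M b) & count (locmax x0 s) (iota 0 (nth 0 M b)) = b].
Proof. exact: nth_filter_iota. Qed.

Lemma mins_nth b : b < size N ->
  [/\ nth 0 N b < t, locmin x0 s (nth 0 N b) & count (locmin x0 s) (iota 0 (nth 0 N b)) = b].
Proof. exact: nth_filter_iota. Qed.

Lemma maxs_interior b : b.+1 < size M ->
  [/\ 0 < nth 0 M b, nth 0 M b < t.-1, up (nth 0 M b).-1 & dn (nth 0 M b)].
Proof.
move=> Hb; have [H1 H2 H3] := maxs_nth (ltnW Hb).
move: H2 => /orP[/eqP Ey|]; last by rewrite !ltO => /and4P[].
have Et : t = (nth 0 M b).+1 by move: H1 Ey; lia.
have E : iota 0 t = iota 0 (nth 0 M b).+1 by rewrite -Et.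
move: Hb; rewrite size_maxs E count_iotaS H3.
by rewrite /locmax Ey eqxx /=; lia.
Qed.

Lemma maxs_mono m b : m < b -> b < size M -> nth 0 M m < nth 0 M b.
Proof.
move=> Hmb Hb; have [_ _ H3] := maxs_nth Hb.
have [_ _ H3'] := maxs_nth (ltn_trans Hmb Hb).
rewrite ltnNge; apply/negP => Hle.
have := count_iota_mono (locmax x0 s) Hle; rewrite H3 H3'; lia.
Qed.

Lemma size_mins : 1 < t -> size N = size M.
Proof.
move=> Ht; rewrite size_maxs size_filter.
have E : iota 0 t = iota 0 (t.-1).+1 by rewrite prednK // ltnW.
have H1 : 0 < t.-1 by move: Ht; lia.
have H2 : t.-1 < t by move: Ht; lia.
rewrite E !count_iotaS (count_inv H1 H2).
have -> : (t.-1).-1 = t - 2 by lia.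
rewrite Hlast // /locmin /locmax !ltO eqxx /=.
have -> : (t.-1 == 0) = false by apply/negbTE; move: Ht; lia.
by rewrite ltnn /= andbF addn0.
Qed.

Lemma mins_after b : b.+1 < size M ->
  nth 0 M b < nth 0 N b.+1 /\ up (nth 0 N b.+1).
Proof.
move=> Hb; have [Hy0 Hyt Hu Hd] := maxs_interior Hb.
have [_ _ Hyc] := maxs_nth (ltnW Hb).
have Ht : 1 < t by move: Hyt; lia.
have HbN : b.+1 < size N by rewrite size_mins.
have [Hz1 Hz2 Hz3] := mins_nth HbN.
set y := nth 0 M b in Hy0 Hyt Hu Hd Hyc *.
set z := nth 0 N b.+1 in Hz1 Hz2 Hz3 *.
have Hyt1 : y < t by move: Hyt; lia.
have Hcy := count_inv Hy0 Hyt1.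
have Hyz : y < z.
  rewrite ltnNge; apply/negP; rewrite leq_eqVlt => /orP[/eqP Ezy|Hzy].
    move: Hz2; rewrite /locmin Ezy -/y.
    have -> : (y == 0) = false by apply/negbTE; move: Hy0; lia.
    rewrite /= => /and4P[_ _ Hd' _].
    exact: (updown_excl Hu Hd').
  have := count_iota_mono (locmin x0 s) Hzy.
  rewrite count_iotaS Hz3 Hz2 Hcy Hyc Hu; lia.
split => //.
move: Hz2; rewrite /locmin.
have -> : (z == 0) = false by apply/negbTE; move: Hyz; lia.
by rewrite /= => /and4P[].
Qed.

Lemma star_witness : uniq s -> ~~ star x0 s ->
  exists i j k, [/\ i < j, j < t, (q j <= q i)%O, i <= k < j & up k].
Proof.
move=> Hu /allPn [b]; rewrite mem_iota add0n => /andP[_ Hb].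
have Hb1 : b.+1 < size M by rewrite /nblocks in Hb; move: Hb; lia.
have [Hy0 Hyt Hup Hdn] := maxs_interior Hb1.
have HbM : b < size M by apply: ltnW.
have [Hyt' _ _] := maxs_nth HbM.
rewrite negb_and => /orP[H1|H2].
- move: H1; rewrite /cond1 disjoint_subset => /subsetPn [y Hy1].
  rewrite !inE negbK => Hy2.
  move: Hy1; rewrite inE => /hasP [j]; rewrite mem_iota add0n => /andP[_ Hjt].
  rewrite /inD ltO leO => /andP[/andP[Hyj _] /eqP Eqj].
  case/orP: Hy2 => [/orP[Hy2|Hy2]|Hy2].
  + case/bigcupP: Hy2 => m Hm; rewrite inE => Hle.
    have Hmb := maxs_mono (ltn_ord m) HbM.
    exists (nth 0 M m), j, (nth 0 M b).-1; split => //.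
    * exact: ltn_trans Hmb Hyj.
    * by rewrite Eqj.
    * by move: Hmb Hyj Hy0; lia.
    move: Hy2 => /hasP [j']; rewrite mem_iota add0n => /andP[_ Hj't].
    rewrite /inA ltO leO => /and3P[/andP[_ Hj'y] Hne Hle].
    exists j', j, (nth 0 M b).-1; split => //.
    * exact: leq_ltn_trans Hj'y Hyj.
    * by rewrite Eqj.
    * by move: Hj'y Hne Hyj Hy0; lia.
  + move: Hy2 => /eqP Ey.
    have := nth_uniq x0 Hjt Hyt' Hu.
    rewrite -/(q j) -/(q (nth 0 M b)) Eqj -/(tA x0 s b) -Ey eqxx => /esym/eqP Ejy.
    by move: Hyj; rewrite Ejy ltnn.
- move: H2; rewrite /cond2 disjoint_subset => /subsetPn [y Hy1].
  rewrite !inE negbK => Hy2.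
  move: Hy1; rewrite inE => /hasP [j]; rewrite mem_iota add0n => /andP[_ Hjt].
  rewrite /inA ltO leO /= => /andP[/andP[Hzj _] /eqP Eqj].
  have [Hyz Hupz] := mins_after Hb1.
  case/bigcupP: Hy2 => m _; rewrite inE => Hle.
  have Hmb : nth 0 M m <= nth 0 M b.
    have := ltn_ord m; rewrite ltnS leq_eqVlt => /orP[/eqP ->//|Hm].
    exact: ltnW (maxs_mono Hm HbM).
  exists (nth 0 M m), j, (nth 0 N b.+1); split => //.
  * by move: Hmb Hyz Hzj; lia.
  * by rewrite Eqj.
  * by move: Hmb Hyz Hzj; lia.
Qed.

End Star.

End P4.
Import P4.

Module P5.
Import Order.Theory.

Section Main.
Context {disp : Order.disp_t} {T : finPOrderType disp}.

Lemma lenstar_le_rank (s : seq T) : good_path s -> uniq s -> lenstar s <= rankstar (T := T).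
Proof.
move=> Hg Hu.
have Hk : size s < #|T|.+1.
  by rewrite ltnS -(card_uniqP Hu) max_card.
have H := @leq_bigmax_cond _ (fun u : (size s).-tuple T => good_path u)
  (fun u => lenstar u) (in_tuple s) Hg.
apply: leq_trans H _.
exact: (@leq_bigmax _ (fun k : 'I_#|T|.+1 =>
   \max_(u : k.-tuple T | good_path u) lenstar u) (Ordinal Hk)).
Qed.

Variables (a : T -> nat) (r Q : nat).
Hypothesis Ha : forall x y : T, (x <= y)%O -> a y <= a x.
Hypothesis HQ : 1 < Q.
Hypothesis Hr : (rankstar (T := T) + 2) * (Q - 1) + 1 <= r.

Local Notation vs := (vs a r Q).
Local Notation dpath := (dpath a r Q).
Local Notation inU := (inU a r Q).

Lemma vs_steps x p : path vs x p ->
  forall j, j.+1 < size (x :: p) -> upstep x (x :: p) j || downstep x (x :: p) j.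
Proof.
move=> /(pathP x) Hp j Hj; have := Hp j Hj.
by rewrite /vs /upstep /downstep /q /= => /orP[->|/andP[->]]; rewrite ?orbT.
Qed.

Lemma deriv_last x p : dpath x p -> 1 < size (x :: p) ->
  upstep x (x :: p) (size (x :: p) - 2).
Proof.
case/and5P => _ _ Hp _ Hmax Ht.
have Hs : 0 < size p by [].
have := vs_steps Hp (j := (size p).-1); rewrite prednK //= => /(_ (leqnn _)).
have -> : (size p).+1 - 2 = (size p).-1 by lia.
case/orP => // Hd.
move: Hmax => /forallP /(_ (q x (x :: p) (size p).-1)).
have E : nth x (x :: p) (size p) = last x p.
  by rewrite -[size p]/((size (x :: p)).-1) nth_last.
move: Hd; rewrite /downstep /q prednK // E => /covers_lt ->.
by [].
Qed.

Lemma dpath_good x p : dpath x p -> uniq (x :: p) -> star x (x :: p) ->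
  good_path (x :: p).
Proof.
move=> Hd Hu Hs; rewrite /good_path /is_maximal_path Hs andbT.
have Hd' := Hd; case/and5P: Hd' => Hmin _ Hp _ Hmax.
apply/andP; split; last first.
  by rewrite /q /= -[size p]/((size (x :: p)).-1) nth_last.
rewrite /is_path Hu Hmin /=; apply/andP; split.
  apply/allP => j; rewrite mem_iota add0n => /andP[_ Hj].
  exact: (vs_steps Hp).
apply/implyP => Ht; have := deriv_last Hd Ht.
by rewrite /= subSS.
Qed.

Lemma step x p : dpath x p ->
  (exists p', dpath x p' && good_path (x :: p')) \/
  (exists p', dpath x p' /\ cnt covers x p' < cnt covers x p).
Proof.
move=> Hd; have Hd' := Hd; case/and5P: Hd' => Hmin HU Hp Hl Hmax.
have [p1 [Hp1 Hu1 Hl1 Hc1]] := uniqify Hp.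
have Hd1 : dpath x p1 by rewrite /dpath Hmin HU Hp1 Hl1 Hl Hmax.
case Hs: (star x (x :: p1)).
  by left; exists p1; rewrite Hd1 dpath_good.
right.
have Hst := vs_steps Hp1.
have Hmin' : minimalb (q x (x :: p1) 0) by [].
have [i [j [k [Hij Hjt Hle /andP[Hik Hkj] Hup]]]] :=
  star_witness Hst Hmin' (deriv_last Hd1) Hu1 (negbT Hs).
have [p2 [Hp2 Hl2 Hc2]] := shortcut HQ Hp1 Hij Hjt Hle Hik Hkj Hup.
exists p2; split; last exact: (leq_trans Hc2 (Hc1 _)).
by rewrite /dpath Hmin HU Hp2 Hl2 Hl1 Hl Hmax.
Qed.

Lemma no_dpath x p : ~ dpath x p.
Proof.
move=> Hd.
suff [p' /andP[Hd' Hg]] : exists p', dpath x p' && good_path (x :: p').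
  have H1 := A_bound Ha HQ Hd' Hr.
  have H2 : cnt (costf a r Q) x p' <= cnt covers x p'.
    by apply: cnt_le => u v /andP[].
  have Hu : uniq (x :: p').
    by move: Hg; rewrite /good_path /is_maximal_path /is_path => /andP[/andP[/and5P[]]].
  have H3 := lenstar_le_rank Hg Hu.
  move: H3; rewrite lenstar_cnt => H3.
  by move: (leq_trans H1 (leq_trans H2 H3)); rewrite ltnn.
move: {2}(cnt covers x p) (leqnn (cnt covers x p)) => n.
elim: n x p Hd => [|n IH] x p Hd Hn.
  case: (step Hd) => // [[p' [_ H]]].
  by move: (leq_trans H Hn).
case: (step Hd) => // [[p' [Hd' H]]].
by apply: (IH x p' Hd'); rewrite -ltnS (leq_trans H Hn).
Qed.

Definition Jset : {set T} :=
  [set y | [exists x, [&& minimalb x, inU x & connect vs x y]]].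

Lemma path_connect x (c : seq T) : path vs x c -> connect vs x (last x c).
Proof. by move=> H; apply/connectP; exists c. Qed.

Lemma J_down y z : y \in Jset -> (z <= y)%O -> z \in Jset.
Proof.
rewrite !inE => /existsP [x /and3P[Hm Hu Hc]] Hzy.
have [c [Hp Hl]] := down_path Hzy.
apply/existsP; exists x; rewrite Hm Hu /=.
apply: (connect_trans Hc); rewrite -Hl; apply: path_connect.
by apply: (sub_path _ Hp) => u v H; rewrite /P3.vs H.
Qed.

Lemma J_U y : inU y -> y \in Jset.
Proof.
move=> Hy; have [m /andP[Hm Hmy]] := ex_minimal_below y.
rewrite inE; apply/existsP; exists m; rewrite Hm /=.
have Hum : inU m by move: Hy; rewrite /P3.inU; have := Ha Hmy; lia.
rewrite Hum /=.
have [c [Hp Hl]] := @up_path _ T vs m y (fun w w' _ Hw' Hc =>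
  introT orP (or_intror (introT andP (conj Hc
    (introT orP (or_introl (leq_trans Hy (leq_trans (Ha Hw') (leqnn _))))))))) Hmy.
by rewrite -Hl; apply: path_connect.
Qed.

Lemma J_conn y z : y \in Jset -> vs y z -> z \in Jset.
Proof.
rewrite !inE => /existsP [x /and3P[Hm Hu Hc]] Hyz.
apply/existsP; exists x; rewrite Hm Hu /=.
by apply: (connect_trans Hc); apply: connect1.
Qed.

Lemma J_geQ y : y \in Jset -> Q <= a y.
Proof.
move=> Hy; rewrite leqNgt; apply/negP => HyQ.
have [m /andP[Hm Hym]] := ex_maximal_above y.
move: Hy; rewrite inE => /existsP [x /and3P[Hx Hu Hc]].
have [c [Hp Hl]] := @up_path _ T vs y m (fun w w' Hw _ Hc =>
  introT orP (or_intror (introT andP (conj Hc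
    (introT orP (or_intror (leq_trans (leq_ltn_trans (Ha Hw) HyQ) (leq_addl _ _)))))))) Hym.
have : connect vs x m by rewrite -Hl; apply: (connect_trans Hc); apply: path_connect.
case/connectP => p Hpp Hlp.
apply: (@no_dpath x p).
rewrite /P3.dpath Hx Hu Hpp -Hlp Hm andbT /=.
exact: leq_ltn_trans (Ha Hym) HyQ.
Qed.

Lemma J_out y : y \notin Jset -> a y <= r - Q.
Proof. by move=> Hy; rewrite leqNgt; apply/negP => H; move: Hy; rewrite J_U. Qed.

Lemma J_gap u v : covers u v -> u \in Jset -> v \notin Jset -> a v + Q <= a u.
Proof.
move=> Hc Hu Hv; rewrite leqNgt; apply/negP => H.
move: Hv; rewrite (J_conn Hu) //.
by rewrite /P3.vs Hc /= H !orbT.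
Qed.

Lemma J_lt x y : (x < y)%O -> x \in Jset -> y \notin Jset -> a y + Q <= a x.
Proof.
move: x y; apply: (@interval_ind _ T (fun x y =>
  x \in Jset -> y \notin Jset -> a y + Q <= a x)).
  by move=> x y Hc; apply: J_gap.
move=> x w y Hxw Hwy IH1 IH2 Hx Hy.
case Hw: (w \in Jset).
  by apply: leq_trans (IH2 Hw Hy) (Ha (ltW Hxw)).
have := IH1 Hx (negbT Hw); have := Ha (ltW Hwy); lia.
Qed.

Lemma comb_main : exists J : {set T},
  [/\ is_poset_ideal J, (forall x, x \in J -> Q <= a x),
      (forall x, x \notin J -> a x <= r - Q) &
      (forall x y, (x <= y)%O -> a y - Q * (y \in J) <= a x - Q * (x \in J))].
Proof.
exists Jset; split.
- apply/forallP => x; apply/forallP => y; apply/implyP => /andP[Hyx Hx].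
  exact: J_down Hx Hyx.
- exact: J_geQ.
- exact: J_out.
move=> x y Hxy.
case Hy: (y \in Jset).
  have Hx : x \in Jset by apply: J_down Hy Hxy.
  rewrite Hx /= muln1; have := Ha Hxy; lia.
case Hx: (x \in Jset); last by rewrite /= !muln0 !subn0 Ha.
have Hlt : (x < y)%O.
  rewrite lt_neqAle Hxy andbT; apply/negP => /eqP E.
  by move: Hx; rewrite E Hy.
have := J_lt Hlt Hx (negbT Hy); rewrite /= muln1 muln0 subn0; lia.
Qed.

End Main.

End P5.
Import P5.

Module P6.
Import GRing.Theory.

Section Alg.
Context {disp : Order.disp_t} {T : finPOrderType disp} {K : fieldType}.
Local Notation PR := {mpoly K[#|T|.+1]}.
Local Open Scope ring_scope.

Implicit Types (S : PR -> Prop) (f g h : PR).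

Lemma inHibi1 : inHibi (1 : PR).
Proof. by rewrite -mpolyC1; apply: inHibi_const. Qed.

Lemma ig0 S : ideal_gen (T := T) S 0.
Proof. by exists [::]; split => //; rewrite big_nil. Qed.

Lemma igD S f g : ideal_gen (T := T) S f -> ideal_gen (T := T) S g -> ideal_gen (T := T) S (f + g).
Proof.
move=> [l1 [H1 ->]] [l2 [H2 ->]]; exists (l1 ++ l2); split; last by rewrite big_cat.
by move=> pr; rewrite mem_cat => /orP[/H1|/H2].
Qed.

Lemma igM S f h : inHibi (T := T) h -> ideal_gen (T := T) S f -> ideal_gen (T := T) S (h * f).
Proof.
move=> Hh [l [Hl ->]]; exists [seq (h * pr.1, pr.2) | pr <- l]; split.
  move=> pr /mapP [pr' Hin ->] /=; have [H1 H2] := Hl _ Hin.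
  by split => //; apply: inHibi_mul.
by rewrite big_map mulr_sumr; apply: eq_bigr => pr _; rewrite mulrA.
Qed.

Lemma igS S g : S g -> ideal_gen (T := T) S g.
Proof.
move=> Hg; exists [:: (1, g)]; split; last by rewrite big_seq1 mul1r.
by move=> pr; rewrite inE => /eqP -> /=; split => //; apply: inHibi1.
Qed.

Lemma ig_sum S (I : eqType) (l : seq I) (F : I -> PR) :
  (forall i, i \in l -> ideal_gen (T := T) S (F i)) -> ideal_gen (T := T) S (\sum_(i <- l) F i).
Proof.
elim: l => [|i l IH] H; first by rewrite big_nil; apply: ig0.
rewrite big_cons; apply: igD; first by apply: H; rewrite inE eqxx.
by apply: IH => j Hj; apply: H; rewrite inE Hj orbT.
Qed.

Lemma ig_mono S (S2 : PR -> Prop) f : (forall g, S g -> ideal_gen (T := T) S2 g) ->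
  ideal_gen (T := T) S f -> ideal_gen (T := T) S2 f.
Proof.
move=> H [l [Hl ->]]; apply: ig_sum => pr Hin.
have [H1 H2] := Hl _ Hin; exact: igM H1 (H _ H2).
Qed.

Definition G (L : seq {set T}) : PR := \prod_(I <- L) hibi_gen I.
Definition SGn (n : nat) (g : PR) :=
  exists L, [/\ (n <= size L)%N, all is_poset_ideal L & g = G L].

Definition mon (L : seq {set T}) : 'X_{1.. #|T|.+1} :=
  (\sum_(I <- L) (U_(ord0) + \sum_(x in I) U_(varX x)))%MM.

Lemma mpolyX_sum (I : Type) (l : seq I) (P : pred I) (F : I -> 'X_{1.. #|T|.+1}) :
  'X_[(\sum_(i <- l | P i) F i)%MM] = \prod_(i <- l | P i) ('X_[F i] : PR).
Proof. exact: (big_morph (fun m => 'X_[m] : PR) (@mpolyXD _ _) (@mpolyX0 _ _)). Qed.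

Lemma G_mon L : G L = 'X_[mon L].
Proof.
rewrite /G /mon mpolyX_sum; apply: eq_bigr => I _.
by rewrite mpolyXD mpolyX_sum.
Qed.

Lemma G_cat L1 L2 : G (L1 ++ L2) = G L1 * G L2.
Proof. by rewrite /G big_cat. Qed.

Lemma G1 I : G [:: I] = hibi_gen I.
Proof. by rewrite /G big_seq1. Qed.

Lemma inHibi_G L : all is_poset_ideal L -> inHibi (G L).
Proof.
elim: L => [|I L IH] /=; first by move=> _; rewrite /G big_nil; apply: inHibi1.
case/andP => HI HL; rewrite /G big_cons; apply: inHibi_mul; first exact: inHibi_gen.
exact: IH.
Qed.

Lemma varX_neq0 (x : T) : (varX x == ord0) = false.
Proof. by rewrite eq_sym; apply/negbTE/neq_lift. Qed.

Lemma varX_eq (x y : T) : (varX y == varX x) = (y == x).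
Proof. by rewrite /varX (inj_eq lift_inj) (inj_eq enum_rank_inj). Qed.

Lemma mon_ord0 L : mon L ord0 = size L.
Proof.
rewrite /mon mnm_sumE -sum1_size; apply: eq_bigr => I _.
rewrite mnmDE mnm1E eqxx mnm_sumE big1 // => x _.
by rewrite mnm1E varX_neq0.
Qed.

Lemma mon_varX L (x : T) : mon L (varX x) = count (fun I : {set T} => x \in I) L.
Proof.
rewrite /mon mnm_sumE; elim: L => [|I L IH]; first by rewrite big_nil.
rewrite big_cons IH /= mnmDE mnm1E eq_sym varX_neq0 add0n; congr (_ + _)%N.
rewrite mnm_sumE.
case Hx: (x \in I).
  rewrite (bigD1 x) //= mnm1E eqxx big1 // => y /andP[_ Hy].
  by rewrite mnm1E varX_eq (negbTE Hy).
rewrite big1 // => y Hy; rewrite mnm1E varX_eq; case: eqP => // E.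
by move: Hx; rewrite -E Hy.
Qed.

Lemma mcoeff0M f g : mcoeff 0%MM (f * g) = mcoeff 0%MM f * mcoeff 0%MM g.
Proof. exact: (mcoeff0_is_multiplicative _ _).1. Qed.

Lemma mcoeff0_G L : (0 < size L)%N -> mcoeff 0%MM (G L) = 0.
Proof.
move=> HL; rewrite G_mon mcoeffX; case: eqP => // E.
by move: HL; rewrite -mon_ord0 E mnm0E.
Qed.

Lemma mcoeff0_SG1 f : ideal_gen (T := T) (SGn 1) f -> mcoeff 0%MM f = 0.
Proof.
move=> [l [Hl ->]].
rewrite (big_morph (mcoeff 0%MM) (@mcoeffD _ _ _) (@mcoeff0 _ _ _)).
rewrite big1_seq // => pr /andP[_ Hin].
have [_ [L [HL _ ->]]] := Hl _ Hin.
by rewrite mcoeff0M mcoeff0_G // mulr0.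
Qed.

Lemma hibi_decomp f : inHibi f -> exists c, ideal_gen (T := T) (SGn 1) (f - c%:MP).
Proof.
elim => [I HI|c|f1 g1 _ [c1 H1] _ [c2 H2]|f1 g1 Hf [c1 H1] Hg [c2 H2]].
- exists 0; rewrite mpolyC0 subr0; apply: igS; exists [:: I]; split => //=.
    by rewrite HI.
  by rewrite G1.
- by exists c; rewrite subrr; apply: ig0.
- exists (c1 + c2).
  have -> : f1 + g1 - (c1 + c2)%:MP = (f1 - c1%:MP) + (g1 - c2%:MP).
    by rewrite mpolyCD; ring.
  exact: igD.
- exists (c1 * c2).
  have -> : f1 * g1 - (c1 * c2)%:MP = g1 * (f1 - c1%:MP) + c1%:MP * (g1 - c2%:MP).
    by rewrite mpolyCM; ring.
  apply: igD; first exact: igM.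
  by apply: igM => //; apply: inHibi_const.
Qed.

Lemma in_m_SG1 x : in_m x -> ideal_gen (T := T) (SGn 1) x.
Proof.
case=> Hx Hm; have [c Hc] := hibi_decomp Hx.
have Hc0 := mcoeff0_SG1 Hc.
have : mcoeff 0%MM x = 0 by apply: Hm; rewrite mnm0E.
have -> : x = (x - c%:MP) + c%:MP by rewrite subrK.
rewrite mcoeffD Hc0 add0r mcoeffC eqxx mulr1 => E.
by rewrite E in Hc *; rewrite mpolyC0 addr0.
Qed.

Lemma SG_mul n m f g : ideal_gen (T := T) (SGn n) f -> ideal_gen (T := T) (SGn m) g ->
  ideal_gen (T := T) (SGn (n + m)) (f * g).
Proof.
move=> [l [Hl ->]] [l' [Hl' ->]].
rewrite mulr_suml; apply: ig_sum => pr Hin.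
have [H1 [L [HL HLi ->]]] := Hl _ Hin.
rewrite -mulrA; apply: igM => //.
rewrite mulr_sumr; apply: ig_sum => pr' Hin'.
have [H1' [L' [HL' HLi' ->]]] := Hl' _ Hin'.
rewrite mulrCA; apply: igM => //; apply: igS.
exists (L ++ L'); split; last by rewrite G_cat.
  by rewrite size_cat leq_add.
by rewrite all_cat HLi HLi'.
Qed.

Lemma SG_prod (xs : seq PR) : (forall x, x \in xs -> in_m x) ->
  ideal_gen (T := T) (SGn (size xs)) (\prod_(x <- xs) x).
Proof.
elim: xs => [|x xs IH] H.
  rewrite big_nil; apply: igS; exists [::]; split => //.
  by rewrite /G big_nil.
rewrite big_cons /=; have -> : (size xs).+1 = (1 + size xs)%N by [].
apply: SG_mul; first by apply: in_m_SG1; apply: H; rewrite inE eqxx.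
by apply: IH => y Hy; apply: H; rewrite inE Hy orbT.
Qed.

Lemma m_pow_SG r f : m_pow r f -> ideal_gen (T := T) (SGn r) f.
Proof.
move=> [l [Hl ->]]; apply: ig_sum => pr Hin.
have [H1 [xs [Hs Hxs ->]]] := Hl _ Hin.
by apply: igM => //; rewrite -Hs; apply: SG_prod.
Qed.

End Alg.

End P6.
Import P6.

Module P7.
Import GRing.Theory.

Lemma count_le_iota c n : count (fun k => k <= c) (iota 1 n) = minn c n.
Proof.
elim: n => [|n IH]; first by rewrite minn0.
rewrite -[n.+1]addn1 iotaD count_cat IH /= addn0 add1n; case: (leqP n.+1 c) => H; lia.
Qed.

Section Core.
Context {disp : Order.disp_t} {T : finPOrderType disp} {K : fieldType}.
Local Notation PR := {mpoly K[#|T|.+1]}.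
Local Open Scope ring_scope.

Lemma count_ideal (L : seq {set T}) (x y : T) : all is_poset_ideal L -> (x <= y)%O ->
  (count (fun I : {set T} => y \in I) L <= count (fun I : {set T} => x \in I) L)%N.
Proof.
move=> HL Hxy; elim: L HL => [|I L IH] //= /andP[HI HL].
apply: leq_add; last exact: IH.
case Hy: (y \in I) => //=.
by move: HI => /forallP /(_ y) /forallP /(_ x); rewrite Hxy Hy /= => ->.
Qed.

Lemma in_m_hibi (J : {set T}) : is_poset_ideal J -> in_m (hibi_gen J : PR).
Proof.
move=> HJ; split; first exact: inHibi_gen.
move=> mm Hmm; rewrite -G1 G_mon mcoeffX; case: eqP => // E.
by move: Hmm; rewrite -E mon_ord0.
Qed.

Lemma SG_frob (Q r : nat) (g : PR) : (1 < Q)%N ->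
  ((rankstar (T := T) + 2) * (Q - 1) + 1 <= r)%N -> SGn r g ->
  ideal_gen (T := T) (fun g => exists x, in_m x /\ g = x ^+ Q) g.
Proof.
move=> HQ Hr [L [HrL HL ->]].
set a := fun x : T => count (fun I : {set T} => x \in I) L.
have Ha : forall x y : T, (x <= y)%O -> (a y <= a x)%N.
  by move=> x y Hxy; apply: count_ideal.
have Hr' : ((rankstar (T := T) + 2) * (Q - 1) + 1 <= size L)%N by apply: leq_trans Hr HrL.
have [J [HJ HJ1 HJ2 HJ3]] := comb_main Ha HQ Hr'.
have HQL : (Q <= size L)%N by move: Hr' HQ; nia.
have HaL : forall x, (a x <= size L)%N by move=> x; apply: count_size.
set b := fun x : T => (a x - Q * (x \in J))%N.
set L' := [seq [set x : T | (k <= b x)%N] | k <- iota 1 (size L - Q)].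
have HL' : all is_poset_ideal L'.
  apply/allP => I /mapP [k _ ->]; apply/forallP => x; apply/forallP => y.
  apply/implyP => /andP[Hyx]; rewrite !inE => Hk.
  exact: leq_trans Hk (HJ3 _ _ Hyx).
have Hb : forall x, (b x <= size L - Q)%N.
  move=> x; rewrite /b; case Hx: (x \in J) => /=.
    by have := HaL x; lia.
  by rewrite muln0 subn0; apply: HJ2; rewrite Hx.
have -> : (G L : PR) = G L' * (hibi_gen J : PR) ^+ Q.
  rewrite -G1 !G_mon mpolyXn -mpolyXD; congr (mpolyX _ _).
  apply/mnmP => i; rewrite mnmDE mulmnE.
  case: (unliftP ord0 i) => [k ->|->].
    have -> : lift ord0 k = varX (enum_val k) by rewrite /varX enum_valK.
    rewrite !mon_varX /= addn0.
    rewrite /L' count_map.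
    have -> : count (preim (fun k0 : nat => [set x | (k0 <= b x)%N]) (fun I : {set T} => enum_val k \in I)) (iota 1 (size L - Q)) = count (fun k0 => k0 <= b (enum_val k))%N (iota 1 (size L - Q)).
      by apply: eq_count => k0 /=; rewrite inE.
    rewrite count_le_iota; have := Hb (enum_val k); rewrite /b -/(a _).
    case Hx: (enum_val k \in J) => /=; last by rewrite muln0 subn0 => H; rewrite mul0n addn0; lia.
    by have := HJ1 _ Hx; rewrite muln1 mul1n; lia.
  rewrite !mon_ord0 /L' size_map size_iota /= mul1n; lia.
apply: igM; first exact: inHibi_G.
apply: igS; exists (hibi_gen J); split => //.
exact: in_m_hibi HJ.
Qed.

End Core.

End P7.
Import P7.

Theorem lemma2p7 (K : fieldType) (p : nat) (charp : (p \in [pchar K])%R)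
    (disp : Order.disp_t) (T : finPOrderType disp) :
  exists e0 : nat, forall e : nat, e0 <= e ->
    forall r : nat, (rankstar (T := T) + 2) * (p ^ e - 1) + 1 <= r ->
      forall f : {mpoly K[#|T|.+1]}, m_pow r f -> m_frob (p ^ e) f.
Proof.
exists 1 => e He r Hr f Hf.
have Hp := GRing.pcharf_prime charp.
have HQ : 1 < p ^ e.
  apply: (leq_trans (prime_gt1 Hp)); rewrite -{1}(expn1 p) leq_pexp2l //.
  exact: prime_gt0.
apply: (ig_mono _ (m_pow_SG Hf)) => g Hg.
exact: SG_frob HQ Hr Hg.
Qed.
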